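(* For every $K>0$ there exist $\varepsilon>0$ and $C>0$ such that for all $\theta\in(0,\varepsilon)$ and all real $\delta$ with $|\delta|\le K\theta$, \[\big|f_0(\theta+\delta)-f_0(\theta)-f_0'(0)\,\delta\big|\le C\,\theta|\delta|,\qquad \big|j_0(\theta+\delta)-j_0(\theta)\big|\le C|\delta|.\] Moreover $f_0(0)=\ln 4$, $\exp(f_0'(0))=e/3$ and $j_0(0)=0$.
   Context: Define $\lambda:[0,\infty)\to(0,1/4]$ by $\lambda(0)=1/4$ and, for $\theta>0$, $\lambda(\theta)$ is the unique $\lambda\in(0,1/4)$ with $-1+\frac{\operatorname{artanh}(\sqrt{1-4\lambda})}{\sqrt{1-4\lambda}}=\theta$. For $\theta>0$ set $f(\theta)=-\ln\lambda(\theta)-2\theta-\theta\ln(1-4\lambda(\theta))$ and $j(\theta)=-\tfrac12\ln(1-4(\theta+1)\lambda(\theta))+\tfrac12\ln 2$, and $f_0(\theta)=f(\theta)+\theta\ln\theta$, $j_0(\theta)=j(\theta)+\tfrac12\ln\theta$. The functions $f_0,j_0$ are real-analytic on $(0,\infty)$ and extend to real-analytic functions on an open neighbourhood of $0$; $f_0,j_0$ denote these extensions. *)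

(* Defs.v *)
From Stdlib Require Import Reals Lra ClassicalEpsilon.
From Coquelicot Require Import Coquelicot.
Open Scope R_scope.

Definition artanh (x : R) : R := / 2 * ln ((1 + x) / (1 - x)).

Definition theta_of_lam (l : R) : R :=
  -1 + artanh (sqrt (1 - 4 * l)) / sqrt (1 - 4 * l).

(* lambda(0) = 1/4; for theta > 0 the (unique) l in (0,1/4) with theta_of_lam l = theta.
   (Values for theta < 0 are irrelevant and arbitrary.) *)
Definition lam (t : R) : R :=
  if Req_EM_T t 0 then / 4
  else epsilon (inhabits 0) (fun l => 0 < l < / 4 /\ theta_of_lam l = t).

Definition f (t : R) : R := - ln (lam t) - 2 * t - t * ln (1 - 4 * lam t).
Definition j (t : R) : R := - / 2 * ln (1 - 4 * (t + 1) * lam t) + / 2 * ln 2.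
Definition f0 (t : R) : R := f t + t * ln t.
Definition j0 (t : R) : R := j t + / 2 * ln t.

Definition analytic_on (U : R -> Prop) (g : R -> R) : Prop :=
  forall x, U x -> exists (a : nat -> R) (rho : R), 0 < rho /\
    forall y, Rabs (y - x) < rho -> is_pseries a (y - x) (g y).

(* Main.v *)
Require Import Defs.
From Stdlib Require Import Reals Lra Lia ClassicalEpsilon.
From Coquelicot Require Import Coquelicot.
Open Scope R_scope.

Lemma cont_of_der (f : R -> R) (x l : R) : is_derive f x l -> continuity_pt f x.
Proof. intros H. apply continuity_pt_filterlim. apply (ex_derive_continuous (V:=R_NormedModule)). exists l; exact H. Qed.

Lemma d1 x : -1 < x < 1 -> is_derive (fun x => artanh x - x - x^3/3) x (x^4/(1-x^2)).
Proof. intros H. unfold artanh. auto_derive.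
- repeat split; try lra. apply Rmult_lt_0_compat; try lra. apply Rinv_0_lt_compat; lra.
- field. repeat split; try lra. intro. nra.
Qed.

Lemma d2 x : -1 < x < 1 -> is_derive (fun x => x + x^3/(3*(1-x^2)) - artanh x) x (2*x^4/(3*(1-x^2)^2)).
Proof. intros H. unfold artanh. auto_derive.
- repeat split; try lra. intro; nra. apply Rmult_lt_0_compat; try lra. apply Rinv_0_lt_compat; lra.
- field. repeat split; try lra. intro. nra.
Qed.

Lemma nonneg_mvt (h dh : R -> R) s : 0 < s < 1 -> h 0 = 0 ->
  (forall x, -1 < x < 1 -> is_derive h x (dh x)) -> (forall x, 0 <= x < 1 -> 0 <= dh x) -> 0 <= h s.
Proof.
  intros Hs H0 Hd Hp.
  destruct (MVT_gen h 0 s dh) as [c [Hc E]].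
  - intros x Hx. rewrite Rmin_left in Hx by lra. rewrite Rmax_right in Hx by lra. apply Hd. lra.
  - intros x Hx. rewrite Rmin_left in Hx by lra. rewrite Rmax_right in Hx by lra. eapply cont_of_der. apply Hd. lra.
  - rewrite Rmin_left in Hc by lra. rewrite Rmax_right in Hc by lra.
    rewrite H0 in E. assert (0 <= dh c) by (apply Hp; lra). nra.
Qed.

Lemma artanh0 : artanh 0 = 0.
Proof. unfold artanh. replace ((1+0)/(1-0)) with 1 by field. rewrite ln_1. ring. Qed.

Lemma artanh_bounds s : 0 < s < 1 -> s + s^3/3 <= artanh s <= s + s^3/(3*(1-s^2)).
Proof.
  intros Hs. split.
  - assert (0 <= artanh s - s - s^3/3); [|lra].
    apply (nonneg_mvt (fun x => artanh x - x - x^3/3) (fun x => x^4/(1-x^2))); auto.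
    + cbv beta. rewrite artanh0. unfold Rdiv. ring.
    + apply d1.
    + intros x Hx. apply Rmult_le_pos. apply pow_le; lra. apply Rlt_le, Rinv_0_lt_compat. nra.
  - assert (0 <= s + s^3/(3*(1-s^2)) - artanh s); [|lra].
    apply (nonneg_mvt (fun x => x + x^3/(3*(1-x^2)) - artanh x) (fun x => 2*x^4/(3*(1-x^2)^2))); auto.
    + cbv beta. rewrite artanh0. replace (0^3) with 0 by ring. unfold Rdiv. rewrite Rmult_0_l. ring.
    + apply d2.
    + intros x Hx. apply Rmult_le_pos. apply Rmult_le_pos. lra. apply pow_le; lra. apply Rlt_le, Rinv_0_lt_compat.
      assert (0 < 1 - x^2) by nra. apply Rmult_lt_0_compat. lra. apply pow_lt. lra.
Qed.

Definition phi (s : R) := -1 + artanh s / s.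

Lemma phi_bounds s : 0 < s < 1 -> s^2/3 <= phi s <= s^2/(3*(1-s^2)).
Proof.
  intros Hs. destruct (artanh_bounds s Hs) as [L U]. unfold phi.
  assert (E : -1 + artanh s / s = (artanh s - s) * / s) by (field; lra).
  rewrite E. assert (0 < / s) by (apply Rinv_0_lt_compat; lra). split.
  - replace (s^2/3) with ((s^3/3) * / s) by (field; lra). apply Rmult_le_compat_r; lra.
  - replace (s^2/(3*(1-s^2))) with ((s^3/(3*(1-s^2))) * / s) by (field; split; [intro; nra| lra]).
    apply Rmult_le_compat_r; lra.
Qed.

Lemma theta_s s : 0 < s < 1 -> theta_of_lam ((1 - s^2)/4) = phi s.
Proof.
  intros Hs. unfold theta_of_lam, phi. replace (1 - 4 * ((1 - s^2)/4)) with (s^2) by field.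
  rewrite sqrt_pow2 by lra. reflexivity.
Qed.

Lemma phi_cont s : 0 < s < 1 -> continuity_pt phi s.
Proof.
  intros Hs. apply continuity_pt_filterlim. apply (ex_derive_continuous (V:=R_NormedModule)).
  unfold phi, artanh. auto_derive. repeat split; try lra.
  apply Rmult_lt_0_compat; try lra. apply Rinv_0_lt_compat; lra.
Qed.

Lemma phi_exists t : 0 < t < /12 -> exists s, 0 < s < 1 /\ phi s = t.
Proof.
  intros Ht.
  destruct (Ranalysis5.IVT_interv (fun s => phi s - t) t (/2)) as [z [Hz E]].
  - intros a Ha. apply continuity_pt_minus. apply phi_cont; lra. apply continuity_pt_const. intros x y; reflexivity.
  - lra.
  - destruct (phi_bounds t) as [_ H]; [lra|].
    assert (t^2/(3*(1-t^2)) < t); [|lra].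
    apply Rmult_lt_reg_r with (3*(1-t^2)). nra.
    replace (t^2/(3*(1-t^2))*(3*(1-t^2))) with (t^2) by (field; intro; nra). nra.
  - destruct (phi_bounds (/2)) as [H _]; [lra|]. lra.
  - exists z. split; [lra|]. lra.
Qed.

Lemma lam_spec t : 0 < t < /12 -> 0 < lam t < /4 /\ theta_of_lam (lam t) = t.
Proof.
  intros Ht. unfold lam. destruct (Req_EM_T t 0) as [|_]; [lra|].
  apply epsilon_spec. destruct (phi_exists t Ht) as [s [Hs E]].
  exists ((1 - s^2)/4). split.
  - split. assert (s^2 < 1) by nra. lra. assert (0 < s^2) by nra. lra.
  - rewrite theta_s; auto.
Qed.

Lemma U_props t : 0 < t < /12 ->
  0 < 1 - 4 * lam t < 1 /\ 3 * t * (1 - (1 - 4 * lam t)) <= 1 - 4 * lam t <= 3 * t.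
Proof.
  intros Ht. destruct (lam_spec t Ht) as [Hl E].
  set (U := 1 - 4 * lam t).
  assert (HU : 0 < U < 1) by (unfold U; lra).
  set (s := sqrt U).
  assert (Hs : 0 < s < 1). { split. apply sqrt_lt_R0; lra. rewrite <- sqrt_1. apply sqrt_lt_1_alt. lra. }
  assert (Hs2 : s^2 = U) by (apply pow2_sqrt; lra).
  assert (Et : phi s = t).
  { rewrite <- E. unfold theta_of_lam, phi. fold U. reflexivity. }
  destruct (phi_bounds s Hs) as [B1 B2]. rewrite Hs2, Et in *.
  split; [exact HU|]. split; [|lra].
  assert (3*t*(1-U) <= 3 * (U/(3*(1-U))) * (1-U)) by nra.
  replace (3 * (U/(3*(1-U))) * (1-U)) with U in H by (field; lra). lra.
Qed.

Lemma ln_le y : 0 < y -> ln y <= y - 1.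
Proof. intros H. pose proof (exp_ineq1_le (ln y)). rewrite exp_ln in H0 by lra. lra. Qed.

Lemma ln_ge y : 0 < y -> 1 - / y <= ln y.
Proof. intros H. pose proof (ln_le (/ y) (Rinv_0_lt_compat _ H)). rewrite ln_Rinv in H0 by lra. lra. Qed.

Lemma f0_est t : 0 < t < /24 -> Rabs (f0 t - ln 4 - (1 - ln 3) * t) <= 16 * t^2.
Proof.
  intros Ht. assert (Ht' : 0 < t < /12) by lra.
  destruct (U_props t Ht') as [HU [B1 B2]].
  unfold f0, Defs.f. set (U := 1 - 4 * lam t) in *.
  replace (lam t) with ((1 - U) * / 4) by (unfold U; field).
  assert (E1 : ln ((1 - U) * / 4) = ln (1 - U) - ln 4).
  { rewrite ln_mult by (try apply Rinv_0_lt_compat; lra). rewrite ln_Rinv by lra. ring. }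
  replace (1 - 4 * ((1 - U) * / 4)) with U by field.
  set (y := U * / (3 * t)).
  assert (Hy0 : 0 < y) by (unfold y; apply Rmult_lt_0_compat; [lra| apply Rinv_0_lt_compat; lra]).
  assert (EU : U = 3 * t * y) by (unfold y; field; lra).
  assert (E2 : ln U = ln 3 + ln t + ln y).
  { rewrite EU. rewrite ln_mult by nra. rewrite ln_mult by lra. ring. }
  rewrite E1, E2.
  set (v := / (1 - U)).
  assert (Hv : v * (1 - U) = 1) by (unfold v; field; lra).
  assert (Hv1 : 1 <= v) by nra.
  assert (Hv2 : v <= 8/7) by nra.
  assert (Hy1 : 1 - U <= y) by nra.
  assert (Hy2 : y <= 1) by nra.
  assert (Hiy : / y <= v) by (apply Rinv_le_contravar; lra).
  pose proof (ln_le y Hy0). pose proof (ln_ge y Hy0).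
  pose proof (ln_le (1 - U) ltac:(lra)). pose proof (ln_ge (1 - U) ltac:(lra)).
  fold v in H2.
  assert (A1 : - ln (1 - U) - 3 * t >= - 9 * t^2) by nra.
  assert (A2 : - ln (1 - U) - 3 * t <= 12 * t^2) by nra.
  assert (C1 : ln y <= 0) by lra.
  assert (C2 : ln y >= - 4 * t) by nra.
  apply Rabs_le. split; nra.
Qed.

Lemma j0_est t : 0 < t < /24 -> Rabs (j0 t) <= 2 * t.
Proof.
  intros Ht. assert (Ht' : 0 < t < /12) by lra.
  destruct (U_props t Ht') as [HU [B1 B2]].
  unfold j0, Defs.j. set (U := 1 - 4 * lam t) in *.
  replace (lam t) with ((1 - U) * / 4) by (unfold U; field).
  replace (1 - 4 * (t + 1) * ((1 - U) * / 4)) with (U - t + t * U) by field.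
  set (y := (U - t + t * U) * / (2 * t)).
  assert (EW : U - t + t * U = 2 * t * y) by (unfold y; field; lra).
  assert (Hy1 : 1 - U <= y) by nra.
  assert (Hy2 : y <= 1 + 3 * t / 2) by nra.
  assert (Hy0 : 0 < y) by lra.
  rewrite EW. rewrite ln_mult by nra. rewrite ln_mult by lra.
  set (v := / (1 - U)).
  assert (Hv : v * (1 - U) = 1) by (unfold v; field; lra).
  assert (Hv1 : 1 <= v) by nra.
  assert (Hv2 : v <= 8/7) by nra.
  assert (Hiy : / y <= v) by (apply Rinv_le_contravar; lra).
  pose proof (ln_le y Hy0). pose proof (ln_ge y Hy0).
  assert (C2 : ln y >= - 4 * t) by nra.
  apply Rabs_le. split; nra.
Qed.
Lemma bounded_of_lim (u : nat -> R) : is_lim_seq u 0 -> exists M, forall n, Rabs (u n) <= M.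
Proof.
  intros H. apply is_lim_seq_spec in H. destruct (H (mkposreal 1 Rlt_0_1)) as [N HN].
  assert (forall K, exists M, forall n, (n < K)%nat -> Rabs (u n) <= M).
  { induction K as [|K [M HM]].
    - exists 0. intros n Hn. lia.
    - exists (Rmax M (Rabs (u K))). intros n Hn.
      destruct (Nat.eq_dec n K) as [->|Hne]. apply Rmax_r.
      eapply Rle_trans. apply HM. lia. apply Rmax_l. }
  destruct (H0 N) as [M HM]. exists (Rmax M 1). intros n.
  destruct (Nat.lt_ge_cases n N). eapply Rle_trans. apply HM; auto. apply Rmax_l.
  eapply Rle_trans. 2: apply Rmax_r. assert (Hn := HN n ltac:(lia)). simpl in Hn.
  rewrite Rminus_0_r in Hn. lra.
Qed.

Lemma radius_ge (a : nat -> R) rho : (forall y, Rabs y < rho -> ex_pseries a y) ->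
  forall r, 0 <= r < rho -> Rbar_le r (CV_radius a).
Proof.
  intros H r Hr. destruct (CV_radius_bounded a) as [Hub _]. apply Hub.
  destruct (H r) as [l Hl]. rewrite Rabs_pos_eq; lra.
  apply is_pseries_R in Hl. apply bounded_of_lim. apply ex_series_lim_0. exists l. exact Hl.
Qed.

Lemma between_abs x y z : Rmin x y <= z <= Rmax x y -> Rabs z <= Rmax (Rabs x) (Rabs y).
Proof.
  intros Hz. pose proof (Rle_abs x). pose proof (Rle_abs (-x)). pose proof (Rle_abs y). pose proof (Rle_abs (-y)).
  rewrite Rabs_Ropp in *. pose proof (Rmax_l (Rabs x) (Rabs y)). pose proof (Rmax_r (Rabs x) (Rabs y)).
  pose proof (Rmin_l x y). pose proof (Rmin_r x y). pose proof (Rmax_l x y). pose proof (Rmax_r x y).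
  apply Rabs_le. unfold Rmin, Rmax in *. destruct (Rle_dec x y); destruct (Rle_dec (Rabs x) (Rabs y)); lra.
Qed.

Lemma pseries_est (G : R -> R) :
  (exists a rho, 0 < rho /\ forall y, Rabs (y - 0) < rho -> is_pseries a (y - 0) (G y)) ->
  exists del M, 0 < del /\ 0 <= M /\ forall x y, Rabs x <= del -> Rabs y <= del ->
    Rabs (G y - G x - Derive G 0 * (y - x)) <= M * (Rabs x + Rabs y) * Rabs (y - x).
Proof.
  intros [a [rho [Hr Ha]]].
  assert (Ha' : forall y, Rabs y < rho -> is_pseries a y (G y)).
  { intros y Hy. specialize (Ha y). rewrite Rminus_0_r in Ha. auto. }
  assert (HG : forall y, Rabs y < rho -> G y = PSeries a y).
  { intros y Hy. symmetry. apply is_pseries_unique. auto. }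
  assert (Hrad : Rbar_le (3 * rho / 4) (CV_radius a)).
  { apply (radius_ge a rho). intros y Hy. exists (G y). apply Ha'. exact Hy. lra. }
  set (del := rho / 2).
  assert (Hin : forall z, Rabs z <= del -> Rbar_lt (Rabs z) (CV_radius a)).
  { intros z Hz. unfold del in Hz. destruct (CV_radius a); simpl in *; lra. }
  set (b := PS_derive (PS_derive a)).
  assert (Hb : CV_radius b = CV_radius a) by (unfold b; rewrite !CV_radius_derive; auto).
  assert (Hdel : 0 < del) by (unfold del; lra).
  set (M := Series (fun n => Rabs (b n * del ^ n))).
  assert (HM : forall z, Rabs z <= del -> Rabs (PSeries b z) <= M).
  { intros z Hz. unfold PSeries. eapply Rle_trans. apply Series_Rabs.
    apply CV_disk_inside. rewrite Hb. auto.
    apply Series_le. intros n; split. apply Rabs_pos.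
    rewrite !Rabs_mult, <- !RPow_abs. apply Rmult_le_compat_l; [apply Rabs_pos|].
    apply pow_incr. split; [apply Rabs_pos|]. rewrite (Rabs_pos_eq del); lra.
    apply CV_disk_inside. rewrite Hb. apply Hin. rewrite Rabs_pos_eq; lra. }
  assert (HM0 : 0 <= M) by (eapply Rle_trans; [apply Rabs_pos| apply (HM 0)]; rewrite Rabs_R0; lra).
  exists del, M. split; [auto|]. split; [auto|].
  intros x y Hx Hy.
  assert (ED : Derive G 0 = PSeries (PS_derive a) 0).
  { rewrite (Derive_ext_loc G (PSeries a)). apply Derive_PSeries. apply Hin. rewrite Rabs_R0; lra.
    exists (mkposreal _ Hr). intros t Ht. apply HG. change (Rabs (t + - 0) < rho) in Ht. rewrite Ropp_0, Rplus_0_r in Ht. exact Ht. }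
  rewrite ED, (HG x), (HG y) by (unfold del in *; lra).
  set (P1 := PSeries (PS_derive a)). set (c0 := P1 0).
  set (h := fun z => PSeries a z - c0 * z).
  assert (Hh : forall z, Rabs z <= del -> is_derive h z (P1 z - c0)).
  { intros z Hz. assert (H1 := is_derive_PSeries a z (Hin z Hz)).
    assert (H2 : is_derive (fun z => c0 * z) z (c0 * 1)) by (auto_derive; auto; ring).
    assert (H := is_derive_minus _ _ _ _ _ H1 H2). unfold minus, plus, opp in H; simpl in H.
    replace (P1 z - c0) with (PSeries (PS_derive a) z + - (c0 * 1)) by (unfold P1; ring). exact H. }
  assert (Hbt : forall z, Rmin x y <= z <= Rmax x y -> Rabs z <= del).
  { intros z Hz. eapply Rle_trans. apply (between_abs x y z Hz). unfold Rmax. destruct Rle_dec; lra. }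
  destruct (MVT_gen h x y (fun z => P1 z - c0)) as [c [Hc Ec]].
  { intros z Hz. apply Hh. apply Hbt. lra. }
  { intros z Hz. eapply cont_of_der. apply Hh. apply Hbt. lra. }
  assert (Hcd : Rabs c <= Rmax (Rabs x) (Rabs y)) by (apply between_abs; auto).
  assert (Hcdel : Rabs c <= del) by (apply Hbt; auto).
  assert (HP1 : forall z, Rabs z <= del -> is_derive P1 z (PSeries b z)).
  { intros z Hz. unfold P1, b. apply is_derive_PSeries. rewrite CV_radius_derive. auto. }
  destruct (MVT_gen P1 0 c (PSeries b)) as [c' [Hc' Ec']].
  { intros z Hz. apply HP1. eapply Rle_trans. apply (between_abs 0 c z). lra. rewrite Rabs_R0. unfold Rmax. destruct Rle_dec; lra. }
  { intros z Hz. eapply cont_of_der. apply HP1. eapply Rle_trans. apply (between_abs 0 c z). lra. rewrite Rabs_R0. unfold Rmax. destruct Rle_dec; pose proof (Rabs_pos c); lra. }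
  assert (Hc'd : Rabs c' <= Rabs c).
  { eapply Rle_trans. apply (between_abs 0 c c'). lra. rewrite Rabs_R0. unfold Rmax. destruct Rle_dec; pose proof (Rabs_pos c); lra. }
  assert (E : PSeries a y - PSeries a x - c0 * (y - x) = h y - h x) by (unfold h; ring).
  rewrite E, Ec. fold c0 in Ec'. replace (P1 c - c0) with (PSeries b c' * c) by lra.
  rewrite !Rabs_mult. apply Rmult_le_compat_r. apply Rabs_pos.
  assert (Hm : Rmax (Rabs x) (Rabs y) <= Rabs x + Rabs y).
  { unfold Rmax. destruct Rle_dec; pose proof (Rabs_pos x); pose proof (Rabs_pos y); lra. }
  apply Rmult_le_compat; try apply Rabs_pos. apply HM. lra. lra.
Qed.

Lemma small_zero z C eta : 0 < eta -> (forall t, 0 < t < eta -> Rabs z <= C * t) -> z = 0.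
Proof.
  intros He H. destruct (Req_dec z 0) as [|Hz]; auto. exfalso.
  assert (Hz' : 0 < Rabs z) by (apply Rabs_pos_lt; auto).
  set (t := Rmin (eta/2) (Rabs z / (2 * (Rabs C + 1)))).
  assert (Ht1 : 0 < t).
  { unfold t. apply Rmin_glb_lt. lra. apply Rdiv_lt_0_compat. lra. pose proof (Rabs_pos C); lra. }
  assert (Ht2 : t <= eta / 2) by apply Rmin_l.
  assert (Ht3 : t <= Rabs z / (2 * (Rabs C + 1))) by apply Rmin_r.
  specialize (H t ltac:(lra)).
  assert (C * t <= Rabs C * t) by (apply Rmult_le_compat_r; [lra| apply Rle_abs]).
  assert (Rabs C * t <= Rabs z / 2).
  { replace (Rabs z / 2) with ((Rabs C + 1) * (Rabs z / (2 * (Rabs C + 1)))) by (field; pose proof (Rabs_pos C); lra).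
    pose proof (Rabs_pos C). nra. }
  lra.
Qed.

Theorem lemma1 (r : R) (F0 J0 : R -> R) :
  0 < r ->
  analytic_on (fun x => - r < x) F0 ->
  analytic_on (fun x => - r < x) J0 ->
  (forall t, 0 < t -> F0 t = f0 t) ->
  (forall t, 0 < t -> J0 t = j0 t) ->
  (forall K, 0 < K -> exists eps C, 0 < eps /\ 0 < C /\
     forall th d, 0 < th < eps -> Rabs d <= K * th ->
       Rabs (F0 (th + d) - F0 th - Derive F0 0 * d) <= C * th * Rabs d /\
       Rabs (J0 (th + d) - J0 th) <= C * Rabs d) /\
  F0 0 = ln 4 /\ exp (Derive F0 0) = exp 1 / 3 /\ J0 0 = 0.
Proof.
  intros Hr HF HJ EF EJ.
  destruct (pseries_est F0 (HF 0 ltac:(lra))) as [dF [MF [HdF [HMF EstF]]]].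
  destruct (pseries_est J0 (HJ 0 ltac:(lra))) as [dJ [MJ [HdJ [HMJ EstJ]]]].
  set (DF := Derive F0 0) in *. set (DJ := Derive J0 0) in *.
  set (eta := Rmin (Rmin dF dJ) (/24)).
  assert (Heta : 0 < eta) by (unfold eta; repeat apply Rmin_glb_lt; lra).
  assert (Heta1 : eta <= dF) by (unfold eta; eapply Rle_trans; [apply Rmin_l| apply Rmin_l]).
  assert (Heta2 : eta <= dJ) by (unfold eta; eapply Rle_trans; [apply Rmin_l| apply Rmin_r]).
  assert (Heta3 : eta <= /24) by (unfold eta; apply Rmin_r).
  assert (Hloc : forall (G : R -> R) D M del, 0 <= M ->
    (forall x y, Rabs x <= del -> Rabs y <= del -> Rabs (G y - G x - D * (y - x)) <= M * (Rabs x + Rabs y) * Rabs (y - x)) ->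
    forall t, 0 < t <= del -> Rabs (G t - G 0 - D * t) <= M * t * t).
  { intros G D M del HM Est t Ht. specialize (Est 0 t). rewrite !Rminus_0_r in Est. rewrite Rabs_R0, Rabs_pos_eq in Est by lra. replace (M * t * t) with (M * (0 + t) * t) by ring.
    apply Est; lra. }
  assert (HF0 : F0 0 = ln 4).
  { apply Rminus_diag_uniq. apply (small_zero _ (Rabs DF + MF + Rabs (1 - ln 3) + 16) eta Heta).
    intros t Ht. pose proof (Hloc F0 DF MF dF HMF EstF t ltac:(lra)). apply Rabs_le_between in H.
    pose proof (f0_est t ltac:(lra)). rewrite <- EF in H0 by lra. apply Rabs_le_between in H0.
    pose proof (Rle_abs DF). pose proof (Rle_abs (-DF)). pose proof (Rle_abs (1 - ln 3)). pose proof (Rle_abs (-(1 - ln 3))).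
    rewrite Rabs_Ropp in *. apply Rabs_le_between. split; nra. }
  assert (HDF : DF = 1 - ln 3).
  { apply Rminus_diag_uniq. apply (small_zero _ (MF + 16) eta Heta).
    intros t Ht. pose proof (Hloc F0 DF MF dF HMF EstF t ltac:(lra)). apply Rabs_le_between in H.
    pose proof (f0_est t ltac:(lra)). rewrite <- EF in H0 by lra. apply Rabs_le_between in H0.
    rewrite HF0 in H. apply Rabs_le_between.
    assert (-(MF + 16) * t * t <= (DF - (1 - ln 3)) * t <= (MF + 16) * t * t) by nra.
    split; apply Rmult_le_reg_r with t; lra. }
  assert (HJ0 : J0 0 = 0).
  { apply (small_zero _ (Rabs DJ + MJ + 2) eta Heta).
    intros t Ht. pose proof (Hloc J0 DJ MJ dJ HMJ EstJ t ltac:(lra)). apply Rabs_le_between in H.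
    pose proof (j0_est t ltac:(lra)). rewrite <- EJ in H0 by lra. apply Rabs_le_between in H0.
    pose proof (Rle_abs DJ). pose proof (Rle_abs (-DJ)). rewrite Rabs_Ropp in *.
    apply Rabs_le_between. split; nra. }
  split; [|split; [exact HF0|split; [|exact HJ0]]].
  2:{ rewrite HDF. unfold Rminus. rewrite exp_plus, exp_Ropp, exp_ln by lra. field. }
  intros K HK.
  exists (Rmin dF dJ / (K + 1)), (MF * (K + 2) + Rabs DJ + 2 * dJ * MJ + 1).
  assert (Hm : 0 < Rmin dF dJ) by (apply Rmin_glb_lt; lra).
  split. apply Rdiv_lt_0_compat; lra.
  split. pose proof (Rabs_pos DJ). nra.
  intros th d Hth Hd.
  assert (Hth' : (K + 1) * th < Rmin dF dJ).
  { destruct Hth as [_ Hth]. apply Rmult_lt_compat_l with (r := K + 1) in Hth; [|lra].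
    replace ((K + 1) * (Rmin dF dJ / (K + 1))) with (Rmin dF dJ) in Hth by (field; lra). exact Hth. }
  pose proof (Rmin_l dF dJ). pose proof (Rmin_r dF dJ).
  assert (Hx : Rabs th = th) by (apply Rabs_pos_eq; lra).
  assert (Hy : Rabs (th + d) <= (K + 1) * th).
  { eapply Rle_trans. apply Rabs_triang. rewrite Hx. lra. }
  pose proof (Rabs_pos d). pose proof (Rabs_pos DJ).
  pose proof (EstF th (th + d) ltac:(lra) ltac:(lra)) as EF1.
  pose proof (EstJ th (th + d) ltac:(lra) ltac:(lra)) as EJ1.
  rewrite Hx in EF1, EJ1.
  replace (th + d - th) with d in EF1, EJ1 by ring.
  split.
  - eapply Rle_trans. apply EF1.
    assert (H5 : MF * (th + Rabs (th + d)) <= MF * (K + 2) * th).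
    { replace (MF * (K + 2) * th) with (MF * ((K + 2) * th)) by ring. apply Rmult_le_compat_l; lra. }
    assert (H6 : 0 <= (Rabs DJ + 2 * dJ * MJ + 1) * th).
    { pose proof (Rmult_le_pos dJ MJ ltac:(lra) HMJ). apply Rmult_le_pos; lra. }
    replace ((MF * (K + 2) + Rabs DJ + 2 * dJ * MJ + 1) * th * Rabs d) with
      ((MF * (K + 2) * th + (Rabs DJ + 2 * dJ * MJ + 1) * th) * Rabs d) by ring.
    apply Rmult_le_compat_r; lra.
  - apply Rabs_le_between in EJ1.
    pose proof (Rle_abs (DJ * d)). pose proof (Rle_abs (-(DJ * d))). rewrite Rabs_Ropp, Rabs_mult in *.
    assert (MJ * (th + Rabs (th + d)) * Rabs d <= 2 * dJ * MJ * Rabs d).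
    { apply Rmult_le_compat_r; [lra|]. replace (2 * dJ * MJ) with (MJ * (2 * dJ)) by ring. apply Rmult_le_compat_l; lra. }
    assert (0 <= MF * (K + 2) * Rabs d) by (apply Rmult_le_pos; [apply Rmult_le_pos|]; lra).
    apply Rabs_le_between. split; nra.
Qed.
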